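(* The system $\dot b_k=\frac{a_k^{(1)}}{1+\alpha b_{k+1}}-\frac{a_{k-1}^{(1)}}{1+\alpha b_{k-1}}$, $\dot a_k^{(j)}=a_k^{(j)}\Big(\frac{b_{k+j}}{1+\alpha b_{k+j}}-\frac{b_k}{1+\alpha b_k}\Big)+\Big(\frac{a_k^{(j+1)}}{1+\alpha b_{k+j+1}}-\frac{a_{k-1}^{(j+1)}}{1+\alpha b_{k-1}}\Big)$ ($1\le j\le m-1$), $\dot a_k^{(m)}=a_k^{(m)}\Big(\frac{b_{k+m}}{1+\alpha b_{k+m}}-\frac{b_k}{1+\alpha b_k}\Big)$ (subscripts modulo $N$) is Hamiltonian with respect to the quadratic bracket $\{\cdot,\cdot\}_2$ on $\mathbb R^{(m+1)N}(b,a^{(1)},\dots,a^{(m)})$ given below, with Hamilton function $H=\alpha^{-1}\sum_{k=1}^N\log(1+\alpha b_k)$.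
   Context: $N\ge2m+2$, $m\ge1$, $\alpha\neq0$ real; subscripts modulo $N$. Convention: $a_k^{(0)}=b_k$, $a_k^{(i)}=0$ for $i<0$ or $i>m$. The bracket $\{\cdot,\cdot\}_2$ has the following nonzero brackets between coordinates (up to antisymmetry), for $1\le i,j\le m$: $\{b_k,b_{k+1}\}_2=-a_k^{(1)}$; $\{b_k,a_{k+1}^{(j)}\}_2=-a_k^{(j+1)}$, $\{a_k^{(j)},b_{k+j+1}\}_2=-a_k^{(j+1)}$; $\{b_k,a_k^{(j)}\}_2=-b_ka_k^{(j)}$, $\{a_k^{(j)},b_{k+j}\}_2=-a_k^{(j)}b_{k+j}$; $\{a_k^{(i)},a_{k+i+1}^{(j)}\}_2=-a_k^{(i+j+1)}$; for $i<j$: $\{a_k^{(i)},a_k^{(j)}\}_2=-a_k^{(i)}a_k^{(j)}$, $\{a_k^{(j)},a_{k+j-i}^{(i)}\}_2=-a_k^{(j)}a_{k+j-i}^{(i)}$; for $i\le j$, $1\le\ell\le i$: $\{a_k^{(i)},a_{k+\ell}^{(j)}\}_2=-a_k^{(i)}a_{k+\ell}^{(j)}-a_k^{(j+\ell)}a_{k+\ell}^{(i-\ell)}$; for $i\le j$, $j-i+1\le\ell\le j$: $\{a_k^{(j)},a_{k+\ell}^{(i)}\}_2=-a_k^{(j)}a_{k+\ell}^{(i)}-a_k^{(i+\ell)}a_{k+\ell}^{(j-\ell)}$. Hamiltonian system: $\dot x=\{H,x\}$ for each coordinate $x$. *)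

(* Defs.v *)
From Stdlib Require Import Reals Lra Lia Arith Bool.
From Coquelicot Require Import Coquelicot.
Open Scope R_scope.
Open Scope bool_scope.

(* A point of R^{(m+1)N} is encoded by s : nat -> nat -> R, where
   s 0 k = b_k and s j k = a_k^{(j)} (1 <= j <= m), for 0 <= k < N.
   Values of s outside this range are irrelevant. *)

Definition A (m N : nat) (s : nat -> nat -> R) (i k : nat) : R :=
  if (i <=? m)%nat then s i (k mod N) else 0.

Definition km1 (N k : nat) : nat := (k + N - 1)%nat.

(* "Forward" bracket {a_k^{(i)}, a_{k+d}^{(j)}}_2 as listed in the paper
   (b = a^{(0)}), for 0 <= d < N; None when no rule is listed for this
   ordered pair. *)
Definition fwd (m N : nat) (s : nat -> nat -> R) (i k j d : nat) : option R :=
  let a := A m N s in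
  if (d =? i + 1)%nat then
    Some (- a (i + j + 1)%nat k)
  else if ((d =? 0) && (i <? j))%nat then
    Some (- (a i k * a j k))
  else if ((j <? i) && (d =? i - j))%nat then
    Some (- (a i k * a j (k + d)%nat))
  else if ((1 <=? i) && (i <=? j) && (1 <=? d) && (d <=? i)
           || (1 <=? j) && (j <=? i) && (i - j + 1 <=? d) && (d <=? i))%nat then
    Some (- (a i k * a j (k + d)%nat) - a (j + d)%nat k * a (i - d)%nat (k + d)%nat)
  else None.

Definition br (m N : nat) (s : nat -> nat -> R) (i k j l : nat) : R :=
  match fwd m N s i k j ((l + N - k) mod N) with
  | Some v => v
  | None =>
    match fwd m N s j l i ((k + N - l) mod N) with
    | Some v => - v
    | None => 0
    end
  end.

Definition upd (s : nat -> nat -> R) (j l : nat) (t : R) : nat -> nat -> R :=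
  fun i k => if ((i =? j) && (k =? l))%nat then t else s i k.

Definition H (m N : nat) (alpha : R) (s : nat -> nat -> R) : R :=
  / alpha * sum_f_R0 (fun k => ln (1 + alpha * A m N s 0 k)) (N - 1).

Definition dH (m N : nat) (alpha : R) (s : nat -> nat -> R) (j l : nat) : R :=
  Derive (fun t => H m N alpha (upd s j l t)) (s j l).

Definition ham_field (m N : nat) (alpha : R) (s : nat -> nat -> R) (i k : nat) : R :=
  sum_f_R0 (fun j =>
    sum_f_R0 (fun l => dH m N alpha s j l * br m N s j l i k) (N - 1)) m.

Definition rhs (m N : nat) (alpha : R) (s : nat -> nat -> R) (i k : nat) : R :=
  let a := A m N s in
  let b := A m N s 0 in
  if (i =? 0)%nat then
    a 1%nat k / (1 + alpha * b (k + 1)%nat) - a 1%nat (km1 N k) / (1 + alpha * b (km1 N k))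
  else if (i <? m)%nat then
    a i k * (b (k + i)%nat / (1 + alpha * b (k + i)%nat) - b k / (1 + alpha * b k))
    + (a (i + 1)%nat k / (1 + alpha * b (k + i + 1)%nat)
       - a (i + 1)%nat (km1 N k) / (1 + alpha * b (km1 N k)))
  else
    a m k * (b (k + m)%nat / (1 + alpha * b (k + m)%nat) - b k / (1 + alpha * b k)).

(* Main.v *)
Require Import Defs.
From Stdlib Require Import Reals Lra Lia Arith Bool.
From Coquelicot Require Import Coquelicot.
Open Scope R_scope.

Lemma sum_derive (f : nat -> R -> R) (f' : nat -> R) x n :
  (forall k, (k <= n)%nat -> is_derive (f k) x (f' k)) ->
  is_derive (fun t => sum_f_R0 (fun k => f k t) n) x (sum_f_R0 f' n).
Proof.
  induction n as [|n IH]; intros Hd; cbn [sum_f_R0].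
  - apply Hd; lia.
  - apply (is_derive_plus (fun t => sum_f_R0 (fun k => f k t) n) (f (S n))).
    + apply IH; intros; apply Hd; lia.
    + apply Hd; lia.
Qed.

Lemma sum_ind_gt (f : nat -> R) p n : (n < p)%nat ->
  sum_f_R0 (fun l => if (l =? p)%nat then f l else 0) n = 0.
Proof.
  induction n as [|n IH]; intros Hp; cbn [sum_f_R0].
  - destruct (Nat.eqb_spec 0 p); [lia|reflexivity].
  - rewrite IH by lia. destruct (Nat.eqb_spec (S n) p); [lia|ring].
Qed.

Lemma sum_ind (f : nat -> R) p n : (p <= n)%nat ->
  sum_f_R0 (fun l => if (l =? p)%nat then f l else 0) n = f p.
Proof.
  induction n as [|n IH]; intros Hp; cbn [sum_f_R0].
  - assert (p = 0%nat) by lia. subst. reflexivity.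
  - destruct (Nat.eqb_spec (S n) p).
    + subst. rewrite sum_ind_gt by lia. ring.
    + rewrite IH by lia. ring.
Qed.

Lemma sum_first (f : nat -> R) n : (forall j, (1 <= j <= n)%nat -> f j = 0) ->
  sum_f_R0 f n = f 0%nat.
Proof.
  induction n as [|n IH]; intros H0; cbn [sum_f_R0]; [reflexivity|].
  rewrite IH by (intros; apply H0; lia). rewrite (H0 (S n)) by lia. ring.
Qed.

Lemma modfact x N : (x < 2 * N)%nat -> (0 < N)%nat ->
  ((x < N)%nat /\ x mod N = x) \/ ((N <= x)%nat /\ x mod N = (x - N)%nat).
Proof.
  intros H1 H2. destruct (Nat.lt_ge_cases x N).
  - left. split; auto. apply Nat.mod_small; auto.
  - right. split; auto.
    replace x with ((x - N) + 1 * N)%nat at 1 by lia.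
    rewrite Nat.mod_add by lia. apply Nat.mod_small; lia.
Qed.

Lemma A_mod m N s i x : (0 < N)%nat -> A m N s i (x mod N) = A m N s i x.
Proof. intros. unfold A. rewrite Nat.mod_mod by lia. reflexivity. Qed.

Lemma A_small m N s x : (x < N)%nat -> A m N s 0 x = s 0%nat x.
Proof. intros. unfold A. simpl. rewrite Nat.mod_small; auto. Qed.

Lemma A_big m N s x : A m N s (m+1) x = 0.
Proof. unfold A. destruct (Nat.leb_spec (m+1) m); [lia|reflexivity]. Qed.

Lemma dH_val m N alpha s j l (halpha : alpha <> 0) :
  (j <= m)%nat -> (l < N)%nat -> 0 < 1 + alpha * s 0%nat l ->
  dH m N alpha s j l = if (j =? 0)%nat then / (1 + alpha * s 0%nat l) else 0.
Proof.
  intros Hj Hl Hpos. unfold dH, H.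
  apply is_derive_unique.
  assert (Hd : is_derive (fun t => sum_f_R0 (fun k => ln (1 + alpha * A m N (upd s j l t) 0 k)) (N-1)) (s j l)
     (sum_f_R0 (fun k => if (k =? l)%nat then (if (j =? 0)%nat then alpha * / (1 + alpha * s 0%nat l) else 0) else 0) (N-1))).
  { apply sum_derive. intros k Hk.
    destruct (Nat.eqb_spec k l) as [->|Hkl]; destruct (Nat.eqb_spec j 0) as [->|Hj0].
    - apply (is_derive_ext (fun t => ln (1 + alpha * t))).
      + intros t. unfold A, upd. simpl. rewrite Nat.mod_small by lia.
        rewrite Nat.eqb_refl. reflexivity.
      + auto_derive. lra. field. lra.
    - apply (is_derive_ext (fun _ => ln (1 + alpha * s 0%nat l))).
      + intros t. unfold A, upd. simpl. rewrite Nat.mod_small by lia.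
        destruct j; [lia|reflexivity].
      + apply (@is_derive_const R_AbsRing R_NormedModule).
    - apply (is_derive_ext (fun _ => ln (1 + alpha * s 0%nat k))).
      + intros t. unfold A, upd. simpl. rewrite Nat.mod_small by lia.
        destruct (Nat.eqb_spec k l); [lia|]. reflexivity.
      + apply (@is_derive_const R_AbsRing R_NormedModule).
    - apply (is_derive_ext (fun _ => ln (1 + alpha * s 0%nat k))).
      + intros t. unfold A, upd. simpl. rewrite Nat.mod_small by lia.
        destruct j; [lia|reflexivity].
      + apply (@is_derive_const R_AbsRing R_NormedModule). }
  rewrite sum_ind in Hd by lia.
  replace (if (j =? 0)%nat then / (1 + alpha * s 0%nat l) else 0)
    with (/ alpha * (if (j =? 0)%nat then alpha * / (1 + alpha * s 0%nat l) else 0)).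
  - apply is_derive_scal. exact Hd.
  - destruct (j =? 0)%nat; field; lra.
Qed.

Ltac bsplit := repeat (match goal with
  | |- context [Nat.eqb ?a ?b] => destruct (Nat.eqb_spec a b)
  | |- context [Nat.ltb ?a ?b] => destruct (Nat.ltb_spec a b)
  | |- context [Nat.leb ?a ?b] => destruct (Nat.leb_spec a b)
  end; try (exfalso; lia); cbn [andb orb]).

Lemma G a b e N : (a < N)%nat -> (b < N)%nat -> (e < N)%nat ->
  (a =? (b + e) mod N)%nat = ((a + N - b) mod N =? e)%nat.
Proof.
  intros Ha Hb He.
  destruct (modfact (b + e) N ltac:(lia) ltac:(lia)) as [[H1 ->]|[H1 ->]];
  destruct (modfact (a + N - b) N ltac:(lia) ltac:(lia)) as [[H2 ->]|[H2 ->]];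
  bsplit; reflexivity.
Qed.

Lemma DD a b N : (a < N)%nat -> (b < N)%nat ->
  ((a + N - b) mod N < N)%nat /\ ((b + N - a) mod N < N)%nat /\
  (((a + N - b) mod N = 0 /\ (b + N - a) mod N = 0) \/
   ((a + N - b) mod N + (b + N - a) mod N = N /\ 0 < (a + N - b) mod N /\ 0 < (b + N - a) mod N))%nat.
Proof.
  intros Ha Hb.
  destruct (modfact (a + N - b) N ltac:(lia) ltac:(lia)) as [[H1 ->]|[H1 ->]];
  destruct (modfact (b + N - a) N ltac:(lia) ltac:(lia)) as [[H2 ->]|[H2 ->]]; lia.
Qed.

Lemma br0 m N s i k l : (1 <= m)%nat -> (2 * m + 2 <= N)%nat -> (i <= m)%nat ->
  (k < N)%nat -> (l < N)%nat ->
  br m N s 0 l i k =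
   (if ((k + N - l) mod N =? 1)%nat then - A m N s (i+1) l else 0)
 + (if ((k + N - l) mod N =? 0)%nat then (if (i =? 0)%nat then 0 else - (A m N s 0 l * A m N s i l)) else 0)
 + (if ((l + N - k) mod N =? i + 1)%nat then A m N s (i+1) k else 0)
 + (if ((l + N - k) mod N =? i)%nat then (if (i =? 0)%nat then 0 else A m N s i k * A m N s 0 (k+i)) else 0).
Proof.
  intros Hm HN Hi Hk Hl.
  unfold br, fwd.
  destruct (DD k l N Hk Hl) as [Hd [Hd' Hdd]].
  generalize dependent ((k + N - l) mod N); intros d Hd Hdd.
  generalize dependent ((l + N - k) mod N); intros d' Hd' Hdd.
  destruct i as [|i']; simpl; bsplit; subst; rewrite ?Nat.add_0_r, ?Nat.sub_0_r; try ring.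
Qed.

Lemma sum_zero (f : nat -> R) n : (forall l, (l <= n)%nat -> f l = 0) -> sum_f_R0 f n = 0.
Proof.
  induction n as [|n IH]; intros H0; cbn [sum_f_R0].
  - apply H0; lia.
  - rewrite IH by (intros; apply H0; lia). rewrite H0 by lia. ring.
Qed.

Theorem mainTheorem11 (m N : nat) (alpha : R)
  (hm : (1 <= m)%nat) (hN : (2 * m + 2 <= N)%nat) (halpha : alpha <> 0)
  (s : nat -> nat -> R)
  (hs : forall k, (k < N)%nat -> 0 < 1 + alpha * A m N s 0 k) :
  forall i k, (i <= m)%nat -> (k < N)%nat ->
    rhs m N alpha s i k = ham_field m N alpha s i k.
Proof.
  intros i k Hi Hk.
  set (g := fun l => / (1 + alpha * A m N s 0 l)).
  unfold ham_field.
  rewrite sum_first.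
  2:{ intros j Hj. apply sum_zero. intros l Hl.
      rewrite dH_val; auto; try lia.
      - destruct (Nat.eqb_spec j 0); [lia|ring].
      - rewrite <- (A_small m N) by lia. apply hs; lia. }
  rewrite (sum_eq _ (fun l =>
     (if (l =? (k + (N - 1)) mod N)%nat then g l * - A m N s (i+1) l else 0)
   + (if (l =? (k + 0) mod N)%nat then g l * (if (i =? 0)%nat then 0 else - (A m N s 0 l * A m N s i l)) else 0)
   + (if (l =? (k + (i + 1)) mod N)%nat then g l * A m N s (i+1) k else 0)
   + (if (l =? (k + i) mod N)%nat then g l * (if (i =? 0)%nat then 0 else A m N s i k * A m N s 0 (k+i)) else 0))).
  2:{ intros l Hl.
      rewrite dH_val by (auto; try lia; rewrite <- (A_small m N) by lia; apply hs; lia).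
      rewrite br0 by lia.
      rewrite !G by lia.
      unfold g. rewrite A_small by lia. simpl Nat.eqb.
      destruct (DD k l N Hk ltac:(lia)) as [Hd [Hd' Hdd]].
      generalize dependent ((k + N - l) mod N); intros d Hd Hdd.
      generalize dependent ((l + N - k) mod N); intros d' Hd' Hdd.
      bsplit; ring. }
  rewrite !sum_plus.
  assert (HN0 : (0 < N)%nat) by lia.
  rewrite !sum_ind by (pose proof (Nat.mod_upper_bound (k + (N-1)) N); pose proof (Nat.mod_upper_bound (k + 0) N);
     pose proof (Nat.mod_upper_bound (k + (i+1)) N); pose proof (Nat.mod_upper_bound (k + i) N); lia).
  unfold g. rewrite !A_mod by lia.
  unfold rhs, km1. cbv zeta.
  replace (k + (N - 1))%nat with (k + N - 1)%nat by lia.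
  replace (k + (i + 1))%nat with (k + i + 1)%nat by lia.
  rewrite Nat.add_0_r.
  destruct (Nat.eqb_spec i 0) as [->|Hi0].
  - rewrite ?Nat.add_0_r. unfold Rdiv. simpl. ring.
  - destruct (Nat.ltb_spec i m).
    + unfold Rdiv. ring.
    + assert (i = m) by lia. subst i. rewrite !A_big. unfold Rdiv. ring.
Qed.
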